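(* Let $\gamma:[0,1]\to\mathbb R^d$ be bounded and measurable, let $\alpha\in(0,1]$, $b\in L^1_tC^{\alpha,\mathrm{loc}}_x$, and consider the ODE $y_t=y_0+\int_0^tb_s(y_s)\mathrm ds+\gamma_t$. Suppose it admits a locally $\beta$-Hölder continuous semiflow $\Phi$ with $\beta(1+\alpha)>1$. Then for any $0\le S\le T\le1$ and $y\in\mathbb R^d$ there exists a unique solution $z:[S,T]\to\mathbb R^d$ of $z_t=y+\int_S^tb_r(z_r)\mathrm dr+\gamma_t-\gamma_S$, $t\in[S,T]$, and it is given by $z_t=\Phi_{S\to t}(y)$.
   Context: $C^{\alpha,\mathrm{loc}}_x$ is the space of functions $f$ on $\mathbb R^d$ with $fg\in C^\alpha_x$ for every smooth compactly supported $g$ (locally $\alpha$-Hölder functions for $\alpha<1$); $L^1_tC^{\alpha,\mathrm{loc}}_x=L^1([0,1];C^{\alpha,\mathrm{loc}}_x)$ (all local seminorms integrable). A semiflow is a jointly measurable $\Phi:\{0\le s\le t\le1\}\times\mathbb R^d\to\mathbb R^d$ with $\Phi_{s\to t}(x)=x+\int_s^tb_r(\Phi_{s\to r}(x))\mathrm dr+\gamma_t-\gamma_s$ for all $(s,x)$, $t\in[s,1]$, and $\Phi_{s\to t}(x)=\Phi_{r\to t}(\Phi_{s\to r}(x))$ for $s\le r\le t$. It is locally $\beta$-Hölder continuous if for every $K>0$ there is $N$ with $|\Phi_{s\to t}(x)-\Phi_{s\to t}(y)|\le N|x-y|^\beta$ for all $s\le t$ and $x,y\in B_K$. *)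

(* Defs.v *)
(* R^d is modelled as row vectors 'rV[R]_d with the
   library's (max) norm; all norms on R^d are equivalent. *)
From HB Require Import structures.
From mathcomp Require Import all_boot all_order all_algebra.
From mathcomp Require Import all_classical all_reals all_analysis.
From mathcomp Require Import measurable_realfun.
Set Implicit Arguments. Unset Strict Implicit. Unset Printing Implicit Defensive.
Import Order.TTheory GRing.Theory Num.Theory.
Import numFieldNormedType.Exports.
Local Open Scope classical_set_scope.
Local Open Scope ring_scope.

Definition vint (R : realType) (d : nat) (s t : R) (f : R -> 'rV[R]_d) : 'rV[R]_d :=
  \row_i Rintegral (@lebesgue_measure R) `[s, t] (fun r => f r 0 i).

Definition vintegrable (R : realType) (d : nat) (s t : R) (f : R -> 'rV[R]_d) : Prop :=
  forall i : 'I_d, (@lebesgue_measure R).-integrable `[s, t] (fun r => (f r 0 i)%:E).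

(* b in L^1_t C^{alpha,loc}_x: b_t(x) measurable in t, and for every ball B_K the
   local C^alpha norm  sup_{B_K}|b_t| + [b_t]_{alpha,B_K}  is dominated by an
   integrable function of t on [0,1]. *)
Definition L1t_Calpha_loc (R : realType) (d : nat) (alpha : R)
    (b : R -> 'rV[R]_d -> 'rV[R]_d) : Prop :=
  (forall (x : 'rV[R]_d) (i : 'I_d), measurable_fun (`[0%R, 1%R] : set R) (fun t => b t x 0 i)) /\
  (forall K : R, 0 < K -> exists g : R -> \bar R,
     [/\ measurable_fun (`[0%R, 1%R] : set R) g,
         (forall t : R, (0 <= g t)%E),
         (\int[@lebesgue_measure R]_(t in (`[0%R, 1%R] : set R)) g t < +oo)%E &
         forall t : R, 0 <= t -> t <= 1 -> forall x y : 'rV[R]_d, `|x| <= K -> `|y| <= K ->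
           ((`|b t x|)%R%:E <= g t)%E /\
           ((`|b t x - b t y|)%R%:E <= g t * ((`|x - y|) `^ alpha)%R%:E)%E]).

Definition borel_sets (T : topologicalType) : set (set T) := <<s setT, open >>.

(* Semiflow of  y_t = y_0 + \int_0^t b_s(y_s) ds + gamma_t  (Phi s t x = Phi_{s->t}(x)) *)
Definition is_semiflow (R : realType) (d : nat) (b : R -> 'rV[R]_d -> 'rV[R]_d)
    (gamma : R -> 'rV[R]_d) (Phi : R -> R -> 'rV[R]_d -> 'rV[R]_d) : Prop :=
  [/\
      (forall (i : 'I_d) (U : set R), open U ->
         borel_sets
           ([set p : (R * R) * 'rV[R]_d | 0 <= p.1.1 /\ p.1.1 <= p.1.2 /\ p.1.2 <= 1]
            `&` (fun p : (R * R) * 'rV[R]_d => Phi p.1.1 p.1.2 p.2 0 i) @^-1` U)),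
      (forall (s t : R) (x : 'rV[R]_d), 0 <= s -> s <= t -> t <= 1 ->
         vintegrable s t (fun r => b r (Phi s r x)) /\
         Phi s t x = x + vint s t (fun r => b r (Phi s r x)) + gamma t - gamma s) &
      (forall (s r t : R) (x : 'rV[R]_d), 0 <= s -> s <= r -> r <= t -> t <= 1 ->
         Phi s t x = Phi r t (Phi s r x))].

Definition loc_holder_semiflow (R : realType) (d : nat) (beta : R)
    (Phi : R -> R -> 'rV[R]_d -> 'rV[R]_d) : Prop :=
  forall K : R, 0 < K -> exists N : R,
    forall (s t : R) (x y : 'rV[R]_d), 0 <= s -> s <= t -> t <= 1 ->
      `|x| <= K -> `|y| <= K -> `|Phi s t x - Phi s t y| <= N * `|x - y| `^ beta.

Definition is_solution (R : realType) (d : nat) (b : R -> 'rV[R]_d -> 'rV[R]_d)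
    (gamma : R -> 'rV[R]_d) (S T : R) (y : 'rV[R]_d) (z : R -> 'rV[R]_d) : Prop :=
  forall t, S <= t -> t <= T ->
    vintegrable S t (fun r => b r (z r)) /\
    z t = y + vint S t (fun r => b r (z r)) + gamma t - gamma S.

(* Main.v *)
Require Import Defs.
From HB Require Import structures.
From mathcomp Require Import all_boot all_order all_algebra.
From mathcomp Require Import all_classical all_reals all_analysis.
From mathcomp Require Import measurable_realfun.
From mathcomp Require Import ring lra.
Set Implicit Arguments. Unset Strict Implicit. Unset Printing Implicit Defensive.
Import Order.TTheory GRing.Theory Num.Theory.
Import numFieldNormedType.Exports.
Local Open Scope classical_set_scope.
Local Open Scope ring_scope.



Lemma comp_le {R : realType} d (M : 'rV[R]_d) i : `|M 0 i| <= `|M|.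
Proof.
rewrite [X in _ <= X]/Num.norm /= mx_normrE.
by apply/bigmax_geP; right; exists (0, i).
Qed.

Lemma mx_le {R : realType} d (M : 'rV[R]_d) C : 0 <= C -> (forall i, `|M 0 i| <= C) -> `|M| <= C.
Proof.
move=> C0 H; rewrite [X in X <= _]/Num.norm /= mx_normrE.
elim/big_ind: _ => //; first by move=> x y; rewrite ge_max => -> ->.
by move=> [i j] _ /=; rewrite (ord1 i); apply: H.
Qed.

Lemma mx_lt {R : realType} d (M : 'rV[R]_d) C : 0 < C -> (forall i, `|M 0 i| < C) -> `|M| < C.
Proof.
move=> C0 H; rewrite [X in X < _]/Num.norm /= mx_normrE.
elim/big_ind: _ => //; first by move=> x y; rewrite gt_max => -> ->.
by move=> [i j] _ /=; rewrite (ord1 i); apply: H.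
Qed.
Lemma within_ed {R : realType} (V : normedModType R) (f : R -> V) (A : set R) x :
  {within A, continuous f} -> A x -> forall e, 0 < e ->
  exists2 dl, 0 < dl & forall y, A y -> `|x - y| < dl -> `|f x - f y| < e.
Proof.
move=> /subspace_continuousP cf Ax e e0.
have H0 := (cvgrPdist_lt _ _).1 (cf x Ax) e e0.
have [dl dl0 H] := (nbhs_ballP _ _).1 (H0 (within_filter _ _)).

by exists dl => // y Ay xy; apply: (H y).

Qed.

Lemma within_mx {R : realType} d (F : R -> 'rV[R]_d) (A : set R) :
  (forall i, {within A, continuous (fun r => F r 0 i)}) -> {within A, continuous F}.
Proof.
move=> H; apply/subspace_continuousP => x Ax; apply/cvgrPdist_lt => e e0.
have Hi i := (cvgrPdist_lt _ _).1 ((subspace_continuousP _ _).1 (H i) x Ax) e e0.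
have HH : \forall t \near within A (nbhs x), forall i, `|F x 0 i - F t 0 i| < e.
  by apply: filter_forall => i; apply: Hi; apply: within_filter.
apply: filterS HH => t Ht; apply: mx_lt => // i.
by rewrite !mxE; exact: Ht i.
Qed.

Lemma real_ind {R : realType} (a c : R) (P : R -> Prop) : a <= c ->
 (forall x, a <= x -> x <= c -> (forall y, a <= y -> y < x -> P y) -> P x) ->
 (forall x, a <= x -> x < c -> (forall y, a <= y -> y <= x -> P y) ->
    exists2 e, 0 < e & forall y, x < y -> y < x + e -> y <= c -> P y) ->
 forall x, a <= x -> x <= c -> P x.
Proof.
move=> ac H1 H2.
pose A := [set x | (a <= x /\ x <= c) /\ forall y, a <= y -> y <= x -> P y].
have Aa : A a.
  split; first by rewrite lexx ac.
  move=> y ay ya; have -> : y = a by apply/eqP; rewrite eq_le ya ay.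
  by apply: H1 => // z az za; move: (le_lt_trans az za); rewrite ltxx.
have ub : ubound A c by move=> x [[_ ->]].
have hs : has_sup A by split; [exists a | exists c].
set m := sup A.
have am : a <= m := sup_upper_bound hs Aa.
have mc : m <= c := ge_sup (ex_intro _ a Aa) ub.
have below : forall y, a <= y -> y < m -> P y.
  move=> y ay ym; have [e [_ Pe]] : exists2 e, A e & m - (m - y) < e.
    by apply: sup_adherent => //; rewrite subr_gt0.
  move=> ye; apply: Pe => //; move: ye; rewrite opprB addrCA subrr addr0 => /ltW.
  by [].
have Pm : P m := H1 m am mc below.
have Am : forall y, a <= y -> y <= m -> P y.
  move=> y ay; rewrite le_eqVlt => /predU1P[->//|]; exact: below y ay.
have [mltc|cm] := ltP m c; last first.
  move=> x ax xc; apply: Am => //; exact: le_trans xc cm.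
have [e e0 He] := H2 m am mltc Am.
pose y := m + Num.min e (c - m) / 2.
have hpos : 0 < Num.min e (c - m) by rewrite lt_min e0 subr_gt0 mltc.
have my : m < y by rewrite /y ltrDl divr_gt0.
have hlt : Num.min e (c - m) / 2 < Num.min e (c - m) by rewrite ltr_pdivrMr // ltr_pMr // ltr1n.
have yc : y <= c.
  rewrite /y -lerBrDl; apply: ltW; apply: lt_le_trans hlt _; by rewrite ge_min lexx orbT.
have ye : y < m + e.
  rewrite /y ltrD2l; apply: lt_le_trans hlt _; by rewrite ge_min lexx.
have Ay : A y.
  split; first by rewrite yc (le_trans am (ltW my)).
  move=> z az zy; have [zm|mz] := leP z m; first exact: Am.
  apply: He => //; [exact: le_lt_trans zy ye | exact: le_trans zy yc].
by move: (sup_upper_bound hs Ay); rewrite leNgt my.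
Qed.


Lemma Rint_split {R : realType} (h : R -> R) a b c : a <= b -> b <= c ->
  (@lebesgue_measure R).-integrable `[a, c] (EFin \o h) ->
  Rintegral (@lebesgue_measure R) `[a, c] h = Rintegral (@lebesgue_measure R) `[a, b] h + Rintegral (@lebesgue_measure R) `[b, c] h.
Proof.
move=> ab bc ih.
have := @Rintegral_itvB R h (BLeft a) (BRight c) b ih.
rewrite !bnd_simp => /(_ ab bc) => E.
rewrite (_ : Rintegral (@lebesgue_measure R) `[b, c] h = Rintegral (@lebesgue_measure R) `]b, c] h); last first.
  rewrite Rintegral_itv_obnd_cbnd //.
  apply: integrableS ih => //; apply: subset_itvr; by rewrite bnd_simp.
by rewrite -E addrC subrK.
Qed.

Lemma vint_same {R : realType} d (f : R -> 'rV[R]_d) s : vint s s f = 0.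
Proof. by apply/rowP => i; rewrite !mxE set_itv1 Rintegral_set1. Qed.

Lemma int_est {R : realType} (g : R -> \bar R) (h : R -> R) (s t c : R) : s <= t -> 0 <= c ->
  measurable_fun `[s, t] g -> (forall r, (0 <= g r)%E) ->
  (@lebesgue_measure R).-integrable `[s, t] (EFin \o h) ->
  (forall r, s <= r -> r <= t -> ((`|h r|)%:E <= g r * c%:E)%E) ->
  ((`|Rintegral (@lebesgue_measure R) `[s, t] h|)%:E <= (\int[(@lebesgue_measure R)]_(r in `[s, t]) g r) * c%:E)%E.
Proof.
move=> st c0 mg g0 ih H.
have fin : (\int[(@lebesgue_measure R)]_(x in `[s, t]) (h x)%:E)%E \is a fin_num by apply: integrable_fin_num.

rewrite /Rintegral -abse_EFin fineK //.
apply: le_trans (le_abse_integral _ _ (measurable_int _ ih)) _ => //.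
rewrite -ge0_integralZr //.
refine (ge0_le_integral _ _ _ _ _ _) => //.
- apply: measurableT_comp => //; exact: measurable_int ih.
- by apply: emeasurable_funM => //; exact: measurable_cst.
- move=> x; rewrite /= in_itv /= => /andP[sx xt]; exact: H.
Qed.

Lemma gconv {R : realType} (g : R -> \bar R) (s t : R) :
  measurable_fun (`[0%R, 1%R] : set R) g -> (forall r, (0 <= g r)%E) ->
  (\int[(@lebesgue_measure R)]_(r in (`[0%R, 1%R] : set R)) g r < +oo)%E ->
  0 <= s -> s <= t -> t <= 1 ->
  (@lebesgue_measure R).-integrable `[s, t] (EFin \o (fun r => fine (g r))) /\
  (\int[(@lebesgue_measure R)]_(r in `[s, t]) g r)%E = (Rintegral (@lebesgue_measure R) `[s, t] (fun r => fine (g r)))%:E.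
Proof.
move=> mg g0 gfin s0 st t1.
have sub : `[s, t] `<=` (`[0%R, 1%R] : set R).
  by apply: subset_itv; rewrite bnd_simp.
have ig : (@lebesgue_measure R).-integrable (`[0%R, 1%R] : set R) g.
  apply/integrableP; split => //.
  by under eq_integral do rewrite gee0_abs //.
have igst : (@lebesgue_measure R).-integrable `[s, t] g by apply: integrableS ig.
have mgst : measurable_fun `[s, t] g by apply: measurable_funS mg.
have mfg : measurable_fun `[s, t] (EFin \o (fun r => fine (g r))).
  apply/measurable_EFinP; apply: measurableT_comp => //.
have E : (\int[(@lebesgue_measure R)]_(r in `[s, t]) g r = \int[(@lebesgue_measure R)]_(r in `[s, t]) (fine (g r))%:E)%E.
  apply: ae_eq_integral => //.
  apply: filterS (integrable_ae _ igst) => // x Hx Dx.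
  by rewrite fineK //; apply: Hx.
have ifg : (@lebesgue_measure R).-integrable `[s, t] (EFin \o (fun r => fine (g r))).
  apply/integrableP; split => //.
  under eq_integral do rewrite gee0_abs ?lee_fin ?fine_ge0 //.
  rewrite -E; apply: le_lt_trans gfin.
  apply: ge0_subset_integral => //.
split => //.
rewrite /Rintegral fineK // -E; exact: integrable_fin_num.
Qed.


Lemma pow_small {R : realType} (N alpha beta eps : R) : 0 <= N -> 0 < alpha -> 0 < beta ->
  1 < beta * (1 + alpha) -> 0 < eps ->
  exists2 dl, 0 < dl & (dl <= 1/4 /\ forall G, 0 <= G -> G <= dl ->
    N * ((G `^ alpha * G) `^ beta) <= eps * G).
Proof.
move=> N0 a0 b0 p1 e0.
set p := beta * (1 + alpha); set q := p - 1.
have q0 : 0 < q by rewrite /q subr_gt0.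
set a := eps / (N + 1).
have a0' : 0 < a by rewrite /a divr_gt0 // ltr_wpDl.
set m := a `^ q^-1.
have m0 : 0 < m by rewrite /m powR_gt0.
exists (Num.min (1/4) m); first by rewrite lt_min m0 andbT divr_gt0.
split; first by rewrite ge_min lexx.
move=> G G0; rewrite le_min => /andP[_ Gm].
set x := G.
have x0 : 0 <= x by [].
have Gx : G <= x by [].
have xa : x <= a `^ q^-1 by [].
have h1 : (x `^ alpha * G) `^ beta <= x `^ p.
  have -> : x `^ p = (x `^ (1 + alpha)) `^ beta by rewrite -powRrM mulrC.
  apply: ge0_ler_powR; first exact: ltW.
  - by rewrite nnegrE mulr_ge0 // powR_ge0.
  - by rewrite nnegrE powR_ge0.
  rewrite powRD; last by rewrite (gt_eqF (ltr_wpDr (ltW a0) ltr01)).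
  by rewrite powRr1 // mulrC; apply: ler_wpM2r => //; rewrite powR_ge0.
have h2 : x `^ p = x * x `^ q.
  rewrite -[X in X * _](powRr1 x0) -powRD; first by rewrite /q addrC subrK.
  by rewrite /q addrC subrK (gt_eqF (lt_trans ltr01 p1)).
have h3 : x `^ q <= a.
  have -> : a = (a `^ q^-1) `^ q by rewrite -powRrM mulVf ?gt_eqF // powRr1 // ltW.
  apply: ge0_ler_powR => //; first exact: ltW.
  by rewrite nnegrE powR_ge0.
apply: le_trans (_ : N * (x * a) <= _).
  apply: ler_wpM2l => //; apply: (le_trans h1); rewrite h2.
  by apply: ler_wpM2l.
have -> : N * (x * a) = (eps * G) * (N / (N + 1)).
  rewrite /x /a; field; by rewrite gt_eqF // ltr_wpDl.
apply: ler_piMr; first by rewrite mulr_ge0 // ltW.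
by rewrite ler_pdivrMr ?mul1r ?lerDl // ltr_wpDl.
Qed.

Lemma core (R : realType) (d : nat) (gamma : R -> 'rV[R]_d) (alpha beta : R)
    (b : R -> 'rV[R]_d -> 'rV[R]_d) (Phi : R -> R -> 'rV[R]_d -> 'rV[R]_d)
    (S T : R) (y : 'rV[R]_d) (z : R -> 'rV[R]_d) :
  (exists M : R, forall t, 0 <= t -> t <= 1 -> `|gamma t| <= M) ->
  0 < alpha ->
  L1t_Calpha_loc alpha b ->
  is_semiflow b gamma Phi ->
  0 < beta -> loc_holder_semiflow beta Phi ->
  1 < beta * (1 + alpha) ->
  0 <= S -> S <= T -> T <= 1 ->
  is_solution b gamma S T y z -> z T = Phi S T y.
Proof.
move=> [M HM] a0 [_ Hb] [_ Hflow Hcomp] b0 Hhol p1 S0 ST T1 Hz.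
have M0 : 0 <= M := le_trans (normr_ge0 _) (HM 0 (lexx 0) ler01).
have Phi_id : forall t x, 0 <= t -> t <= 1 -> Phi t t x = x.
  move=> t x t0 t1; have [_ ->] := Hflow t t x t0 (lexx t) t1.
  by rewrite vint_same addr0 addrK.
have zS : z S = y.
  by have [_ ->] := Hz S (lexx S) ST; rewrite vint_same addr0 addrK.
have intz : forall i t, S <= t -> t <= T ->
    (@lebesgue_measure R).-integrable `[S, t] (EFin \o (fun r => b r (z r) 0 i)).
  by move=> i t St tT; exact: ((Hz t St tT).1 i).
pose Bi i := Rintegral (@lebesgue_measure R) `[S, T] (fun r => `|b r (z r) 0 i|).
pose B := \sum_i Bi i.
have Bi0 : forall i, 0 <= Bi i.
  by move=> i; apply: Rintegral_ge0 => x _.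
have B0 : 0 <= B by apply: sumr_ge0 => i _.
have BiB : forall i, Bi i <= B.
  by move=> i; rewrite /B (bigD1 i) //= lerDl sumr_ge0.
have vz : forall t, S <= t -> t <= T -> `|vint S t (fun r => b r (z r))| <= B.
  move=> t St tT; apply: mx_le => // i; rewrite mxE; apply: le_trans (BiB i).
  apply: le_trans (le_normr_Rintegral _ (intz i t St tT)) _ => //.
  rewrite /Bi (@Rint_split _ _ S t T St tT) ?lerDl ?Rintegral_ge0 //.
  exact: integrable_norm (intz i T ST (lexx T)).
pose K0 := `|y| + B + M + M.
have K00 : 0 <= K0 by rewrite /K0 !addr_ge0.
have zK : forall t, S <= t -> t <= T -> `|z t| <= K0.
  move=> t St tT; have [_ ->] := Hz t St tT.
  apply: le_trans (ler_normB _ _) _.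
  apply: lerD; last exact: HM S S0 (le_trans ST T1).
  apply: le_trans (ler_normD _ _) _.
  apply: lerD; last exact: HM t (le_trans S0 St) (le_trans tT T1).
  apply: le_trans (ler_normD _ _) _; apply: lerD => //; exact: vz.
pose K := K0 + 1.
have Kpos : 0 < K by rewrite /K ltr_wpDl.
have [g [mg g0 gfin Hg]] := Hb K Kpos.
have [NK HN] := Hhol K Kpos.
pose gr r := fine (g r).
pose G s t := Rintegral (@lebesgue_measure R) `[s, t] gr.
have Gconv : forall s t, 0 <= s -> s <= t -> t <= 1 ->
    (@lebesgue_measure R).-integrable `[s, t] (EFin \o gr) /\
    (\int[@lebesgue_measure R]_(r in `[s, t]) g r)%E = (G s t)%:E.
  by move=> s t s0 st t1; apply: gconv.
have G0 : forall s t, 0 <= G s t.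
  by move=> s t; apply: Rintegral_ge0 => x _; apply: fine_ge0.
have Gadd : forall s u t, 0 <= s -> s <= u -> u <= t -> t <= 1 -> G s t = G s u + G u t.
  move=> s u t s0 su ut t1; apply: Rint_split => //.
  exact: (Gconv s t s0 (le_trans su ut) t1).1.
have Gmono : forall s u t, 0 <= s -> s <= u -> u <= t -> t <= 1 -> G s u <= G s t.
  by move=> s u t s0 su ut t1; rewrite (Gadd s u t) // lerDl.
pose H t := G 0 t.
have Hcont : {within `[0, 1], continuous H}.
  exact: (parameterized_integral_continuous ler01 (Gconv 0 1 (lexx 0) ler01 (lexx 1)).1).
have GH : forall s t, 0 <= s -> s <= t -> t <= 1 -> G s t = H t - H s.
  by move=> s t s0 st t1; rewrite /H (Gadd 0 s t) // addrAC subrr add0r.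
pose W s r := Phi s r (z s) - z r.
pose hv s u := b u (Phi s u (z s)) - b u (z u).
have hvE : forall s i, (fun u => hv s u 0 i) =
    (fun u => b u (Phi s u (z s)) 0 i - b u (z u) 0 i).
  by move=> s i; apply: funext => u; rewrite /hv !mxE.
have intW : forall s t i, S <= s -> s <= t -> t <= T ->
    (@lebesgue_measure R).-integrable `[s, t] (EFin \o (fun u => hv s u 0 i)).
  move=> s t i Ss st tT.
  have s0 : 0 <= s := le_trans S0 Ss.
  have t1 : t <= 1 := le_trans tT T1.
  have i1 := (Hflow s t (z s) s0 st t1).1 i.
  have i2 : (@lebesgue_measure R).-integrable `[s, t] (EFin \o (fun r => b r (z r) 0 i)).
    apply: integrableS (intz i t (le_trans Ss st) tT) => //.
    by apply: subset_itvr; rewrite bnd_simp.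
  by rewrite hvE; apply: eq_integrable (integrableB _ i1 i2).
have Wid : forall s r, S <= s -> s <= r -> r <= T -> W s r = vint s r (hv s).
  move=> s r Ss sr rT.
  have s0 : 0 <= s := le_trans S0 Ss.
  have r1 : r <= 1 := le_trans rT T1.
  rewrite /W; have [iF ->] := Hflow s r (z s) s0 sr r1.
  have [_ ezr] := Hz r (le_trans Ss sr) rT.
  have [_ ezs] := Hz s Ss (le_trans sr rT).
  rewrite {1}ezs ezr; apply/rowP => i; rewrite !mxE.
  rewrite (@Rint_split _ _ S s r Ss sr (intz i r (le_trans Ss sr) rT)).
  have i2 : (@lebesgue_measure R).-integrable `[s, r] (EFin \o (fun u => b u (z u) 0 i)).
    apply: integrableS (intz i r (le_trans Ss sr) rT) => //.
    by apply: subset_itvr; rewrite bnd_simp.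
  rewrite hvE RintegralB //; try exact: (iF i); try exact: i2.
  lra.
have Wed : forall s t r, S <= s -> s <= r -> r <= t -> t <= T -> forall e, 0 < e ->
    exists2 dl, 0 < dl & forall u, s <= u -> u <= t -> `|r - u| < dl ->
      `|W s r - W s u| < e.
  move=> s t r Ss sr rt tT e e0.
  have st : s <= t := le_trans sr rt.
  have Wc : {within `[s, t], continuous (fun r => vint s r (hv s))}.
    apply: within_mx => i.
    have -> : (fun r => vint s r (hv s) 0 i) =
        (fun r => parameterized_integral (@lebesgue_measure R) s r (fun u => hv s u 0 i)).
      by apply: funext => v; rewrite /vint mxE.
    exact: parameterized_integral_continuous st (intW s t i Ss st tT).
  have Ar : `[s, t]%classic r by rewrite /= in_itv /= sr rt.
  have [dl dl0 Hd] := within_ed Wc Ar e0.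
  exists dl => // u su ut ru.
  have Au : `[s, t]%classic u by rewrite /= in_itv /= su ut.
  rewrite (Wid s r) ?(le_trans rt tT) // (Wid s u) ?(le_trans ut tT) //.
  exact: Hd.
have EST : forall s t c, S <= s -> s <= t -> t <= T -> 0 <= c -> c <= 1 ->
    (forall u, s <= u -> u <= t -> `|W s u| <= c) -> `|W s t| <= c `^ alpha * G s t.
  move=> s t c Ss st tT c0 c1 HW.
  have s0 : 0 <= s := le_trans S0 Ss.
  have t1 : t <= 1 := le_trans tT T1.
  rewrite (Wid s t) //; apply: mx_le => [|i]; first by rewrite mulr_ge0 ?powR_ge0.
  rewrite mxE.
  have mgst : measurable_fun `[s, t] g.
    apply: measurable_funS mg => //; apply: subset_itv; by rewrite bnd_simp.
  have := @int_est R g (fun u => hv s u 0 i) s t (c `^ alpha) st (powR_ge0 _ _) mgst g0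
    (intW s t i Ss st tT).
  rewrite (Gconv s t s0 st t1).2 -EFinM lee_fin mulrC; apply.
  move=> u su ut.
  have u0 : 0 <= u := le_trans s0 su.
  have u1 : u <= 1 := le_trans ut t1.
  have zu : `|z u| <= K by rewrite /K (le_trans (zK u (le_trans Ss su) (le_trans ut tT))) // lerDl.
  have Pu : `|Phi s u (z s)| <= K.
    have -> : Phi s u (z s) = z u + W s u by rewrite /W addrC subrK.
    apply: le_trans (ler_normD _ _) _; rewrite /K; apply: lerD.
      exact: zK u (le_trans Ss su) (le_trans ut tT).
    exact: le_trans (HW u su ut) c1.
  have [_ Hh] := Hg u u0 u1 _ _ Pu zu.
  apply: le_trans (_ : (`|hv s u|)%:E <= _)%E.
    by rewrite lee_fin; exact: comp_le.
  apply: le_trans Hh _; apply: lee_wpmul2l => //; rewrite lee_fin.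
  apply: ge0_ler_powR; rewrite ?nnegrE ?normr_ge0 //; first exact: ltW.
  exact: HW.
have boot : forall s t, S <= s -> s <= t -> t <= T -> G s t < 1 ->
    forall r, s <= r -> r <= t -> `|W s r| <= G s t.
  move=> s t Ss st tT G1.
  have s0 : 0 <= s := le_trans S0 Ss.
  apply: (real_ind st).
  - move=> x sx xt IH.
    have [xs|xs] := eqVneq x s.
      by rewrite xs /W Phi_id ?subrr ?normr0 // (le_trans st (le_trans tT T1)).
    have sltx : s < x by rewrite lt_neqAle eq_sym xs sx.
    rewrite leNgt; apply/negP => cW.
    have e0 : 0 < `|W s x| - G s t by rewrite subr_gt0.
    have [dl dl0 Hd] := Wed s t x Ss sx xt tT _ e0.
    pose u := Num.max s (x - dl / 2).
    have su : s <= u by rewrite le_max lexx.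
    have hu1 : x - dl / 2 <= u by rewrite le_max lexx orbT.
    have h1 : x - dl / 2 < x by lra.
    have ux : u < x by rewrite gt_max sltx h1.
    have ut : u <= t by rewrite ge_max st /=; lra.
    have dist : `|x - u| < dl by rewrite ger0_norm ?subr_ge0 ?(ltW ux) //; lra.
    have H1 := Hd u su ut dist.
    have H2 := IH u su ux.
    have H3 := ler_normD (W s x - W s u) (W s u); rewrite subrK in H3.
    lra.
  - move=> x sx xt IH.
    have cx := IH x sx (lexx x).
    have e0 : 0 < 1 - G s t by rewrite subr_gt0.
    have [dl dl0 Hd] := Wed s t x Ss sx (ltW xt) tT _ e0.
    exists dl => // v xv vxd vt.
    have sv : s <= v := le_trans sx (ltW xv).
    have vT := le_trans vt tT.
    apply: le_trans (EST s v 1 Ss sv vT ler01 (lexx 1) _) _; last first.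
      by rewrite powR1 /= mul1r; apply: Gmono => //; exact: le_trans tT T1.
    move=> u su uv; have [ux|xu] := leP u x.
      by have := IH u su ux; have := G1; lra.
    have ut := le_trans uv vt.
    have dist : `|x - u| < dl.
      by rewrite distrC ger0_norm ?subr_ge0 ?(ltW xu) //; lra.
    have H1 := Hd u (le_trans sx (ltW xu)) ut dist.
    have H3 := ler_normD (W s u - W s x) (W s x); rewrite subrK in H3.
    rewrite distrC in H1.
    lra.
have LOC : forall eps, 0 < eps -> exists2 dl, 0 < dl & forall s t, S <= s -> s <= t ->
    t <= T -> G s t <= dl -> `|Phi t T (z t) - Phi s T (z s)| <= eps * G s t.
  move=> eps e0.
  have [dl dl0 [dl14 Hp]] := @pow_small R `|NK| alpha beta eps (normr_ge0 _) a0 b0 p1 e0.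
  exists dl => // s t Ss st tT Gd.
  have s0 : 0 <= s := le_trans S0 Ss.
  have t0 : 0 <= t := le_trans s0 st.
  have G1 : G s t < 1 by apply: (le_lt_trans Gd); apply: (le_lt_trans dl14); lra.
  have Hboot := boot s t Ss st tT G1.
  have Wt := EST s t (G s t) Ss st tT (G0 s t) (ltW G1) Hboot.
  rewrite (Hcomp s t T (z s) s0 st tT T1).
  have zt : `|z t| <= K by rewrite /K (le_trans (zK t (le_trans Ss st) tT)) // lerDl.
  have Pt : `|Phi s t (z s)| <= K.
    have -> : Phi s t (z s) = z t + W s t by rewrite /W addrC subrK.
    apply: le_trans (ler_normD _ _) _; rewrite /K; apply: lerD.
      exact: zK t (le_trans Ss st) tT.
    by apply: le_trans (Hboot t st (lexx t)) _; exact: ltW.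
  apply: le_trans (HN t T (z t) (Phi s t (z s)) t0 tT T1 zt Pt) _.
  apply: le_trans _ (Hp _ (G0 s t) Gd).
  apply: le_trans (_ : `|NK| * `|z t - Phi s t (z s)| `^ beta <= _).
    by apply: ler_wpM2r; [exact: powR_ge0 | exact: ler_norm].
  apply: ler_wpM2l => //; apply: ge0_ler_powR; first exact: ltW.
  - by rewrite nnegrE normr_ge0.
  - by rewrite nnegrE mulr_ge0 ?powR_ge0.
  by rewrite distrC.
pose f u := Phi u T (z u).
have Hfin : forall eps, 0 < eps -> `|f T - f S| <= eps * G S T.
  move=> eps e0; have [dl dl0 Hl] := LOC eps e0.
  have T0 : 0 <= T := le_trans S0 ST.
  apply: (real_ind ST (P := fun t => `|f t - f S| <= eps * G S t)) => //.
  - move=> x Sx xT IH.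
    have [xS|xS] := eqVneq x S.
      by rewrite xS subrr normr0 mulr_ge0 // ltW.
    have Sltx : S < x by rewrite lt_neqAle eq_sym xS Sx.
    have x0 : 0 <= x := le_trans S0 Sx.
    have x1 : x <= 1 := le_trans xT T1.
    have Ax : `[0, 1]%classic x by rewrite /= in_itv /= x0 x1.
    have [dh dh0 Hd] := within_ed Hcont Ax dl0.
    pose u := Num.max S (x - dh / 2).
    have Su : S <= u by rewrite le_max lexx.
    have hu1 : x - dh / 2 <= u by rewrite le_max lexx orbT.
    have h1 : x - dh / 2 < x by lra.
    have ux : u < x by rewrite gt_max Sltx h1.
    have u0 : 0 <= u := le_trans S0 Su.
    have Au : `[0, 1]%classic u by rewrite /= in_itv /= u0 (le_trans (ltW ux) x1).
    have dist : `|x - u| < dh by rewrite ger0_norm ?subr_ge0 ?(ltW ux) //; lra.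
    have H1 := Hd u Au dist.
    have Gux : G u x <= dl.
      rewrite (GH u x u0 (ltW ux) x1); apply: ltW; apply: le_lt_trans H1.
      exact: ler_norm.
    have H2 := Hl u x Su (ltW ux) xT Gux.
    have H3 := IH u Su ux.
    rewrite (Gadd S u x S0 Su (ltW ux) x1).
    have H4 := ler_normD (f x - f u) (f u - f S).
    rewrite addrA subrK in H4.
    rewrite /f in H2 H3 H4 *.
    lra.
  - move=> x Sx xT IH.
    have cx := IH x Sx (lexx x).
    have x0 : 0 <= x := le_trans S0 Sx.
    have x1 : x <= 1 := le_trans (ltW xT) T1.
    have Ax : `[0, 1]%classic x by rewrite /= in_itv /= x0 x1.
    have [dh dh0 Hd] := within_ed Hcont Ax dl0.
    exists dh => // v xv vxd vT.
    have v1 : v <= 1 := le_trans vT T1.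
    have Av : `[0, 1]%classic v by rewrite /= in_itv /= (le_trans x0 (ltW xv)) v1.
    have dist : `|x - v| < dh by rewrite distrC ger0_norm ?subr_ge0 ?(ltW xv) //; lra.
    have H1 := Hd v Av dist.
    have Gxv : G x v <= dl.
      rewrite (GH x v x0 (ltW xv) v1); apply: ltW; apply: le_lt_trans H1.
      by rewrite distrC; exact: ler_norm.
    have H2 := Hl x v Sx (ltW xv) vT Gxv.
    rewrite (Gadd S x v S0 Sx (ltW xv) v1).
    have H4 := ler_normD (f v - f x) (f x - f S).
    rewrite addrA subrK in H4.
    rewrite /f in H2 cx H4 *.
    lra.
have fTS : f T = f S.
  apply/eqP; rewrite -subr_eq0 -normr_eq0 eq_le normr_ge0 andbT.
  rewrite leNgt; apply/negP => D0.
  set D := `|f T - f S| in D0.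
  have GT0 := G0 S T.
  have e0 : 0 < D / (G S T + 1) by rewrite divr_gt0 // ltr_wpDl.
  have := Hfin _ e0; rewrite -/D => HD.
  have : D / (G S T + 1) * G S T < D.
    rewrite mulrAC ltr_pdivrMr ?ltr_wpDl //.
    by rewrite ltr_pM2l // ltrDl.
  lra.
move: fTS; rewrite /f Phi_id ?zS //; exact: le_trans S0 ST.
Qed.

Unset Implicit Arguments.

Theorem lemma4p5 (R : realType) (d : nat) (gamma : R -> 'rV[R]_d) (alpha beta : R)
    (b : R -> 'rV[R]_d -> 'rV[R]_d) (Phi : R -> R -> 'rV[R]_d -> 'rV[R]_d) :
  (forall i : 'I_d, measurable_fun (`[0%R, 1%R] : set R) (fun t => gamma t 0 i)) ->
  (exists M : R, forall t, 0 <= t -> t <= 1 -> `|gamma t| <= M) ->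
  0 < alpha -> alpha <= 1 ->
  L1t_Calpha_loc alpha b ->
  is_semiflow b gamma Phi ->
  0 < beta -> loc_holder_semiflow beta Phi ->
  1 < beta * (1 + alpha) ->
  forall (S T : R) (y : 'rV[R]_d), 0 <= S -> S <= T -> T <= 1 ->
    is_solution b gamma S T y (fun t => Phi S t y) /\
    (forall z : R -> 'rV[R]_d, is_solution b gamma S T y z ->
       forall t, S <= t -> t <= T -> z t = Phi S t y).
Proof.
move=> _ HM a0 _ Hb Hsf b0 Hhol p1 S T y S0 ST T1.
split.
- move=> t St tT; have [_ Hflow _] := Hsf.
  exact: Hflow S t y S0 St (le_trans tT T1).
- move=> z Hz t St tT.
  apply: (@core R d gamma alpha beta b Phi S t y z HM a0 Hb Hsf b0 Hhol p1 S0 St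
    (le_trans tT T1)).
  by move=> u Su ut; exact: Hz u Su (le_trans ut tT).
Qed.
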